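(* Let $G$ be a torsion abelian group and $\varphi\colon G\to G$ an endomorphism. Then $\varphi$ is positively expansive if and only if it is a factor of a unilateral Bernoulli shift $\sigma\colon S^{(\mathbb N)}\to S^{(\mathbb N)}$ for some finite abelian group $S$. Analogously, an automorphism $\varphi\colon G\to G$ is expansive if and only if it is a factor of a bilateral Bernoulli shift $\sigma\colon S^{(\mathbb Z)}\to S^{(\mathbb Z)}$ for some finite abelian group $S$.
   Context: $\mathbb N=\{0,1,2,\dots\}$. An endomorphism $\varphi$ of an abelian group $G$ is positively expansive if there is a finite subgroup $S\leq G$ such that for every finite subgroup $F\leq G$ there is $n\in\mathbb N$ with $F\subseteq\sum_{k=0}^n\varphi^kS$; an automorphism is expansive if the same holds with $\sum_{|k|\leq n}\varphi^kS$ in place of $\sum_{k=0}^n\varphi^kS$. For $I\in\{\mathbb N,\mathbb Z\}$ and a finite abelian group $S$, $S^{(I)}=\bigoplus_{k\in I}S$ (finitely supported sequences), and the shift $\sigma\colon S^{(I)}\to S^{(I)}$ is $\sigma((s_k))=(s_{k-1})$, with the convention $s_{-1}=0$ when $I=\mathbb N$. An endomorphism $\psi\colon H\to H$ is a factor of $\varphi\colon G\to G$ if there is a surjective homomorphism $\pi\colon G\to H$ with $\pi\circ\varphi=\psi\circ\pi$. *)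

(* Defs.v *)
From HB Require Import structures.
From mathcomp Require Import all_boot all_order all_algebra.
From mathcomp Require Import finmap.
Set Implicit Arguments. Unset Strict Implicit. Unset Printing Implicit Defensive.
Import Order.TTheory GRing.Theory Num.Theory.
Local Open Scope ring_scope.
Local Open Scope fset_scope.

Definition torsion (G : zmodType) : Prop :=
  forall x : G, exists n : nat, (0 < n)%N /\ x *+ n = 0.

Definition finite_subgroup (G : zmodType) (A : {fset G}) : Prop :=
  0 \in A /\ (forall x y, x \in A -> y \in A -> x - y \in A).

Definition in_pos_sum (G : zmodType) (phi : G -> G) (S : {fset G}) (n : nat)
  (x : G) : Prop :=
  exists s : nat -> G, (forall k, s k \in S) /\
    x = \sum_(k < n.+1) iter k phi (s k).

Definition iterz (G : Type) (phi psi : G -> G) (k : int) : G -> G :=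
  match k with
  | Posz m => iter m phi
  | Negz m => iter m.+1 psi
  end.

Definition in_bil_sum (G : zmodType) (phi psi : G -> G) (S : {fset G}) (n : nat)
  (x : G) : Prop :=
  exists s : int -> G, (forall k, s k \in S) /\
    x = \sum_(i < (n.*2).+1) iterz phi psi (i%:Z - n%:Z) (s (i%:Z - n%:Z)).

Definition pos_expansive (G : zmodType) (phi : G -> G) : Prop :=
  exists S : {fset G}, finite_subgroup S /\
    forall F : {fset G}, finite_subgroup F ->
      exists n : nat, forall x, x \in F -> in_pos_sum phi S n x.

Definition expansive (G : zmodType) (phi : G -> G) : Prop :=
  exists psi : G -> G, cancel phi psi /\ cancel psi phi /\
  exists S : {fset G}, finite_subgroup S /\
    forall F : {fset G}, finite_subgroup F ->
      exists n : nat, forall x, x \in F -> in_bil_sum phi psi S n x.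

Local Close Scope fset_scope.
(* S^(N) and S^(Z): finitely supported sequences, as predicates on all
   sequences; the group operation is pointwise addition. *)
Definition fsupp_nat (S : zmodType) (s : nat -> S) : Prop :=
  exists N : nat, forall k, (N <= k)%N -> s k = 0.

Definition fsupp_int (S : zmodType) (s : int -> S) : Prop :=
  exists N : nat, forall k : int, N%:Z <= `|k| -> s k = 0.

Definition ushift (S : zmodType) (s : nat -> S) : nat -> S :=
  fun k => if k is k'.+1 then s k' else 0.

Definition bshift (S : zmodType) (s : int -> S) : int -> S :=
  fun k => s (k - 1).

Definition factor_of_ushift (G : zmodType) (phi : G -> G) (S : zmodType) : Prop :=
  exists pi : (nat -> S) -> G,
    (forall s t, fsupp_nat s -> fsupp_nat t ->
        pi (fun k => s k + t k) = pi s + pi t) /\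
    (forall g : G, exists s, fsupp_nat s /\ pi s = g) /\
    (forall s, fsupp_nat s -> pi (ushift s) = phi (pi s)).

Definition factor_of_bshift (G : zmodType) (phi : G -> G) (S : zmodType) : Prop :=
  exists pi : (int -> S) -> G,
    (forall s t, fsupp_int s -> fsupp_int t ->
        pi (fun k => s k + t k) = pi s + pi t) /\
    (forall g : G, exists s, fsupp_int s /\ pi s = g) /\
    (forall s, fsupp_int s -> pi (bshift s) = phi (pi s)).

(* Main.v *)
Require Import Defs.
From HB Require Import structures.
From mathcomp Require Import all_boot all_order all_algebra.
From mathcomp Require Import finmap.
Set Implicit Arguments. Unset Strict Implicit. Unset Printing Implicit Defensive.
Import Order.TTheory GRing.Theory Num.Theory.
Local Open Scope ring_scope.

Section Sub.
Variables (G : zmodType) (A : {fset G}).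
Definition closedb : bool :=
  (0 \in A) && [forall x : A, [forall y : A, (val x - val y) \in A]].
Definition clA : {fset G} := if closedb then A else [fset (0:G)]%fset.
Definition clP : {pred G} := fun x => x \in clA.
Fact clP_zmod : zmod_closed clP.
Proof.
rewrite /clP /clA; case: ifP => [/andP[h0 /forallP h] | _].
  split => // x y xA yA; move/forallP: (h [` xA]%fset) => /(_ [` yA]%fset). done.
split; first by rewrite inE. by move=> x y; rewrite !inE => /eqP-> /eqP->; rewrite subr0.
Qed.
HB.instance Definition _ := GRing.isZmodClosed.Build G clP clP_zmod.
Inductive subg : predArgType := Subg u & u \in clP.
Definition sgval w : G := let: Subg u _ := w in u.
HB.instance Definition _ := [isSub of subg for sgval].
HB.instance Definition _ := [Choice of subg by <:].
HB.instance Definition _ := [SubChoice_isSubZmodule of subg by <:].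
Lemma sgval_fin : injective sgval. Proof. exact: val_inj. Qed.
Definition sg_enc (w : subg) : clA := [` (valP w : sgval w \in clA)]%fset.
Definition sg_dec (w : clA) : subg := Subg (fsvalP w : val w \in clP).
Lemma sg_encK : cancel sg_enc sg_dec. Proof. by move=> w; apply: val_inj. Qed.
HB.instance Definition _ := isCountable.Build subg (pcan_pickleK (can_pcan sg_encK)).
HB.instance Definition _ := isFinite.Build subg (pcan_enumP (can_pcan sg_encK)).
Lemma sgvalD : {morph sgval : x y / x + y}. Proof. by []. Qed.
End Sub.
Lemma closedbP (G : zmodType) (A : {fset G}) : finite_subgroup A -> clA A = A.
Proof.
case=> h0 h; rewrite /clA /closedb h0 /=.
have -> : [forall x : A, [forall y : A, (val x - val y) \in A]].
  by apply/forallP=> x; apply/forallP => y; apply: h; apply: fsvalP.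
done.
Qed.

From Stdlib Require Import FunctionalExtensionality ClassicalEpsilon.
From mathcomp Require Import zify.

Lemma sum_stable (V : zmodType) (f : nat -> V) N M :
  (forall k, (N <= k)%N -> f k = 0) -> (N <= M)%N ->
  \sum_(k < M) f k = \sum_(k < N) f k.
Proof.
move=> hf hNM; rewrite -!(big_mkord xpredT) (big_cat_nat (leq0n N) hNM) /=.
have -> : \big[+%R/0]_(N <= i < M) f i = 0.
  by rewrite big1_seq // => k /andP[_]; rewrite mem_index_iota => /andP[hk _]; apply: hf.
by rewrite addr0.
Qed.

Lemma delta_sum_nat (V : zmodType) (F : nat -> V) (j m : nat) :
  \sum_(k < m) (if j == (k : nat) then F k else 0) = if (j < m)%N then F j else 0.
Proof.
elim: m => [|m IH]; first by rewrite big_ord0.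
rewrite big_ord_recr /= IH.
case: (ltngtP j m) => [h|h|->]; rewrite ?addr0 ?add0r ?ltnSn //.
- by rewrite (ltn_trans h (ltnSn m)).
- by rewrite ltnNge h.
Qed.

Lemma fsupp_nat_add (S : zmodType) (s t : nat -> S) :
  fsupp_nat s -> fsupp_nat t -> fsupp_nat (fun k => s k + t k).
Proof.
move=> [N hN] [M hM]; exists (maxn N M) => k hk.
rewrite hN ?hM ?addr0 //; lia.
Qed.

Lemma fsupp_int_add (S : zmodType) (s t : int -> S) :
  fsupp_int s -> fsupp_int t -> fsupp_int (fun k => s k + t k).
Proof.
move=> [N hN] [M hM]; exists (maxn N M) => k hk.
rewrite hN ?hM ?addr0 //; apply: le_trans hk; rewrite lez_nat; lia.
Qed.

Lemma pi_sum (I : Type) (S G : zmodType) (P : (I -> S) -> Prop)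
  (pi : (I -> S) -> G) :
  (forall s t, P s -> P t -> P (fun k => s k + t k)) -> P (fun _ => 0) ->
  (forall s t, P s -> P t -> pi (fun k => s k + t k) = pi s + pi t) ->
  forall m (F : nat -> I -> S), (forall i, P (F i)) ->
  P (fun j => \sum_(k < m) F k j) /\
  pi (fun j => \sum_(k < m) F k j) = \sum_(k < m) pi (F k).
Proof.
move=> hadd h0 hpi; elim=> [|m IH] F hF.
  have e : (fun j : I => \sum_(k < 0) F k j) = (fun _ => 0).
    by apply: functional_extensionality => j; rewrite big_ord0.
  rewrite e big_ord0; split => //.
  have := hpi _ _ h0 h0; rewrite (_ : (fun _ : I => 0 + 0) = fun _ => 0).
    by move/eqP; rewrite -subr_eq subrr eq_sym => /eqP.
  by apply: functional_extensionality => j; rewrite addr0.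
have e : (fun j : I => \sum_(k < m.+1) F k j) =
   (fun j => (\sum_(k < m) F k j) + F m j).
  by apply: functional_extensionality => j; rewrite big_ord_recr.
case: (IH F hF) => hP hs.
by rewrite e big_ord_recr /= -hs; split; [apply: hadd | apply: hpi].
Qed.

Lemma unif_bound (G : zmodType) (P : nat -> G -> Prop) (l : seq G) :
  (forall x, exists N, forall n, (N <= n)%N -> P n x) ->
  exists N, forall x, x \in l -> P N x.
Proof.
move=> h.
suff [N hN] : exists N, forall x, x \in l -> forall n, (N <= n)%N -> P n x.
  by exists N => x hx; apply: hN.
elim: l => [|a l [N IH]]; first by exists 0%N.
have [M hM] := h a; exists (maxn N M) => x; rewrite inE => /orP[/eqP-> | hx] n hn.
  apply: hM; lia.
apply: IH => //; lia.
Qed.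

Lemma mulrn_mod (G : zmodType) (g : G) n m : g *+ n = 0 -> g *+ m = g *+ (m %% n).
Proof.
move=> hg; rewrite {1}(divn_eq m n) mulrnDr mulnC mulrnA hg mul0rn add0r //.
Qed.

Lemma cyclic_fset (G : zmodType) (g : G) n : (0 < n)%N -> g *+ n = 0 ->
  exists F : {fset G}, finite_subgroup F /\ g \in F.
Proof.
move=> hn hg; exists (seq_fset tt (mkseq (fun i => g *+ i) n)).
have mem : forall m, g *+ m \in seq_fset tt (mkseq (fun i => g *+ i) n).
  move=> m; rewrite seq_fsetE (mulrn_mod m hg); apply/mapP.
  by exists (m %% n)%N => //; rewrite mem_iota add0n ltn_mod hn.
have memE : forall x, x \in seq_fset tt (mkseq (fun i => g *+ i) n) -> exists m, x = g *+ m.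
  by move=> x; rewrite seq_fsetE => /mapP[m _ ->]; exists m.
split; last by rewrite -(mulr1n g) mem.
split; first by rewrite -(mulr0n g) mem.
move=> x y /memE[a ->] /memE[b ->].
rewrite (mulrn_mod b hg); set c := (b %% n)%N.
have hc : (c <= n)%N by rewrite ltnW // ltn_mod.
have -> : g *+ c = g *+ n - g *+ (n - c) by rewrite -mulrnBr ?leq_subr // subKn.
by rewrite hg sub0r opprK -mulrnDr mem.
Qed.

Lemma ac4 (V : zmodType) (a b c d : V) : d + ((a + b) + c) = (a + c) + (b + d).
Proof. by rewrite [LHS]addrC -[LHS]addrA [LHS]addrACA. Qed.

Lemma bil_conv (V : zmodType) (f : int -> V) n :
  \sum_(i < (n.*2).+1) f (i%:Z - n%:Z) =
  \sum_(k < n.+1) f k%:Z + \sum_(k < n) f (Negz k).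
Proof.
elim: n => [|n IH].
  by rewrite !big_ord1 big_ord0 [RHS]addr0 subrr.
rewrite doubleS big_ord_recl big_ord_recr /=.
have e : \sum_(i < n.*2.+1) f ((bump 0 i)%:Z - (n.+1)%:Z) = \sum_(i < n.*2.+1) f (i%:Z - n%:Z).
  by apply: eq_bigr => i _; congr f; rewrite /bump /=; lia.
rewrite e IH [X in _ = X + _]big_ord_recr [X in _ = _ + X]big_ord_recr /=.
have -> : (bump 0 n.*2.+1)%:Z - (n.+1)%:Z = (n.+1)%:Z by rewrite /bump /=; lia.
have -> : (0%:Z - (n.+1)%:Z) = Negz n by rewrite NegzE; lia.
exact: ac4.
Qed.

Lemma iter_add0 (G : zmodType) (phi : {additive G -> G}) k : iter k phi 0 = 0.
Proof. by elim: k => //= k ->; rewrite raddf0. Qed.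

Lemma iter_addD (G : zmodType) (phi : {additive G -> G}) k x y :
  iter k phi (x + y) = iter k phi x + iter k phi y.
Proof. by elim: k => //= k ->; rewrite raddfD. Qed.

Lemma iter_sum (G : zmodType) (phi : {additive G -> G}) k m (F : nat -> G) :
  iter k phi (\sum_(i < m) F i) = \sum_(i < m) iter k phi (F i).
Proof.
elim: m => [|m IH]; first by rewrite !big_ord0 iter_add0.
by rewrite !big_ord_recr iter_addD IH.
Qed.

Definition bnd_nat (S : zmodType) (t : nat -> S) : nat :=
  epsilon (inhabits 0%N) (fun N => forall k, (N <= k)%N -> t k = 0).

Definition piU (G : zmodType) (phi : G -> G) (A : {fset G}) (t : nat -> subg A) : G :=
  \sum_(k < bnd_nat t) iter k phi (sgval (t k)).

Lemma sgval0 (G : zmodType) (A : {fset G}) : sgval (0 : subg A) = 0.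
Proof. by []. Qed.

Lemma sgvalD' (G : zmodType) (A : {fset G}) (x y : subg A) : sgval (x + y) = sgval x + sgval y.
Proof. by []. Qed.

Lemma piU_eq (G : zmodType) (phi : {additive G -> G}) (A : {fset G}) (t : nat -> subg A) N :
  (forall k, (N <= k)%N -> t k = 0) ->
  piU phi t = \sum_(k < N) iter k phi (sgval (t k)).
Proof.
move=> hN.
have hb := epsilon_spec (inhabits 0%N) (fun N => forall k, (N <= k)%N -> t k = 0) (ex_intro _ N hN).
rewrite /piU -/(bnd_nat t) in hb *.
have hz : forall M, (forall k, (M <= k)%N -> t k = 0) ->
   forall k, (M <= k)%N -> iter k phi (sgval (t k)) = 0.
  by move=> M hM k hk; rewrite hM // sgval0 iter_add0.
rewrite -(sum_stable (hz _ hb) (leq_maxl (bnd_nat t) N)).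
by rewrite (sum_stable (hz _ hN) (leq_maxr (bnd_nat t) N)).
Qed.

Lemma fwd_pos (G : zmodType) (hG : torsion G) (phi : {additive G -> G}) :
  pos_expansive phi -> exists S : finZmodType, factor_of_ushift phi S.
Proof.
case=> A [hA hF]; exists (subg A); exists (@piU G phi A).
have clE : forall x, (x \in clP A) = (x \in A) by move=> x; rewrite /clP /= closedbP.
split.
  move=> s t [Ns hs] [Nt ht].
  set M := maxn Ns Nt.
  have hs' : forall k, (M <= k)%N -> s k = 0.
    by move=> k hk; apply: hs; apply: leq_trans hk; apply: leq_maxl.
  have ht' : forall k, (M <= k)%N -> t k = 0.
    by move=> k hk; apply: ht; apply: leq_trans hk; apply: leq_maxr.
  have hst : forall k, (M <= k)%N -> (fun k => s k + t k) k = 0.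
    by move=> k hk; rewrite /= hs' ?ht' ?addr0.
  rewrite (piU_eq phi hs') (piU_eq phi ht') (piU_eq phi hst).
  by rewrite -big_split /=; apply: eq_bigr => k _; rewrite iter_addD.
split.
  move=> g; have [n [hn hg]] := hG g.
  have [F [hFs gF]] := cyclic_fset hn hg.
  have [n0 hn0] := hF F hFs.
  have [s [hsA ->]] := hn0 g gF.
  pose t k : subg A := if (k <= n0)%N then insubd 0 (s k) else 0.
  have ht : forall k, (n0.+1 <= k)%N -> t k = 0.
    by move=> k hk; rewrite /t leqNgt hk.
  exists t; split; first by exists n0.+1.
  rewrite (piU_eq phi ht); apply: eq_bigr => k _.
  by rewrite /t -ltnS ltn_ord /= val_insubd clE hsA.
move=> t [N hN].
have hN' : forall k, (N.+1 <= k)%N -> ushift t k = 0.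
  by case=> // k hk; apply: hN.
rewrite (piU_eq phi hN') (piU_eq phi hN) big_ord_recl /= add0r raddf_sum.
by [].
Qed.

Definition dnat {S : zmodType} (j : nat) (a : S) : nat -> S :=
  fun k => if k == j then a else 0.

Lemma bwd_pos (G : zmodType) (phi : {additive G -> G}) (S : finZmodType) :
  factor_of_ushift phi S -> pos_expansive phi.
Proof.
case=> pi [hadd [hsurj hshift]].
have fs_d : forall (j : nat) (a : S), fsupp_nat (dnat j a).
  move=> j a; exists j.+1 => k hk; rewrite /dnat; case: eqP => // e.
  by rewrite e ltnn in hk.
have fs0 : fsupp_nat (fun _ : nat => (0 : S)) by exists 0%N.
have hsub : forall a b : S, pi (dnat 0 (a - b)) = pi (dnat 0 a) - pi (dnat 0 b).
  move=> a b; apply/eqP; rewrite eq_sym subr_eq -hadd //.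
  rewrite (_ : (fun k => dnat 0 (a - b) k + dnat 0 b k) = dnat 0 a) //.
  by apply: functional_extensionality => k; rewrite /dnat; case: eqP => _; rewrite ?subrK ?addr0.
set A := seq_fset tt [seq pi (dnat 0 a) | a <- enum S].
have memA : forall a : S, pi (dnat 0 a) \in A.
  by move=> a; rewrite seq_fsetE; apply: map_f; rewrite mem_enum.
have hA : finite_subgroup A.
  split.
    have := memA 0; rewrite -(subrr (0 : S)) hsub subrr; done.
  move=> x y; rewrite /A !seq_fsetE => /mapP[a _ ->] /mapP[b _ ->]; by rewrite -hsub; apply: map_f; rewrite mem_enum.
have pidel : forall (k : nat) (a : S), pi (dnat k a) = iter k phi (pi (dnat 0 a)).
  elim=> // k IH a; rewrite /= -IH -hshift //; congr pi.
  by apply: functional_extensionality => j; case: j => [|j].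
exists A; split => // F hFs.
have key : forall x, exists N, forall n, (N <= n)%N -> in_pos_sum phi A n x.
  move=> x; have [s [[N hN] <-]] := hsurj x.
  exists N => n hn.
  exists (fun k => pi (dnat 0 (s k))); split => //.
  have es : s = (fun j => \sum_(k < n.+1) dnat k (s k) j).
    apply: functional_extensionality => j; rewrite /dnat delta_sum_nat.
    case: ltnP => // hj; rewrite hN //; apply: leq_trans hn _; exact: ltnW.
  rewrite {1}es; have [_ ->] := pi_sum (@fsupp_nat_add S) fs0 hadd n.+1 (fun k => fs_d k (s k)).
  by apply: eq_bigr => k _; apply: pidel.
have [N hN] := unif_bound (enum_fset F) key.
by exists N => x hx; apply: hN.
Qed.

Section Bil.
Variables (G : zmodType) (phi : {additive G -> G}) (psi : G -> G).
Hypotheses (hK1 : cancel phi psi) (hK2 : cancel psi phi).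

Lemma psiD x y : psi (x + y) = psi x + psi y.
Proof. by apply: (can_inj hK1); rewrite raddfD !hK2. Qed.

Lemma psi0 : psi 0 = 0.
Proof. by apply: (can_inj hK1); rewrite raddf0 hK2. Qed.

Lemma iterz0 k : iterz phi psi k 0 = 0.
Proof.
case: k => m /=; first exact: iter_add0.
elim: m => [|m IH] /=; first exact: psi0.
by rewrite IH psi0.
Qed.

Lemma iterzD k x y : iterz phi psi k (x + y) = iterz phi psi k x + iterz phi psi k y.
Proof.
case: k => m /=; first exact: iter_addD.
elim: m => [|m IH] /=; first exact: psiD.
by rewrite IH psiD.
Qed.

Lemma iterz_succ k x : iterz phi psi (k + 1) x = phi (iterz phi psi k x).
Proof.
case: k => [m|[|m]].
- by rewrite (_ : Posz m + 1 = Posz m.+1) //; lia.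
- by rewrite (_ : Negz 0 + 1 = Posz 0) /= ?hK2 //.
- rewrite (_ : Negz m.+1 + 1 = Negz m); last by rewrite !NegzE; lia.
  by rewrite /= hK2.
Qed.

Lemma iterz_pred k x : iterz phi psi k x = phi (iterz phi psi (k - 1) x).
Proof. by rewrite -iterz_succ subrK. Qed.
End Bil.

Definition bsum (V : zmodType) (f : int -> V) (N : nat) : V :=
  \sum_(k < N) f k%:Z + \sum_(k < N) f (Negz k).

Lemma bsum_stable (V : zmodType) (f : int -> V) N M :
  (forall k : int, N%:Z <= `|k| -> f k = 0) -> (N <= M)%N -> bsum f M = bsum f N.
Proof.
move=> hf hNM; rewrite /bsum.
rewrite (sum_stable (f := fun k : nat => f k%:Z) (N := N)) //; last first.
  by move=> k hk; apply: hf; lia.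
rewrite (sum_stable (f := fun k : nat => f (Negz k)) (N := N)) //.
by move=> k hk; apply: hf; rewrite NegzE; lia.
Qed.

Definition bnd_int (S : zmodType) (t : int -> S) : nat :=
  epsilon (inhabits 0%N) (fun N => forall k : int, N%:Z <= `|k| -> t k = 0).

Definition piB (G : zmodType) (phi psi : G -> G) (A : {fset G}) (t : int -> subg A) : G :=
  bsum (fun k => iterz phi psi k (sgval (t k))) (bnd_int t).

Lemma piB_eq (G : zmodType) (phi : {additive G -> G}) psi (hK1 : cancel phi psi)
  (hK2 : cancel psi phi) (A : {fset G}) (t : int -> subg A) N :
  (forall k : int, N%:Z <= `|k| -> t k = 0) ->
  piB phi psi t = bsum (fun k => iterz phi psi k (sgval (t k))) N.
Proof.
move=> hN.
have hb := epsilon_spec (inhabits 0%N) (fun N => forall k : int, N%:Z <= `|k| -> t k = 0) (ex_intro _ N hN).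
rewrite /piB -/(bnd_int t) in hb *.
have hz : forall M, (forall k : int, M%:Z <= `|k| -> t k = 0) ->
   forall k : int, M%:Z <= `|k| -> iterz phi psi k (sgval (t k)) = 0.
  by move=> M hM k hk; rewrite hM // sgval0 (iterz0 hK1 hK2).
rewrite -(bsum_stable (hz _ hb) (leq_maxl (bnd_int t) N)).
by rewrite (bsum_stable (hz _ hN) (leq_maxr (bnd_int t) N)).
Qed.

Lemma fwd_bil (G : zmodType) (hG : torsion G) (phi : {additive G -> G}) :
  expansive phi -> exists S : finZmodType, factor_of_bshift phi S.
Proof.
case=> psi [hK1 [hK2 [A [hA hF]]]]; exists (subg A); exists (@piB G phi psi A).
have clE : forall x, (x \in clP A) = (x \in A) by move=> x; rewrite /clP /= closedbP.
split.
  move=> s t [Ns hs] [Nt ht].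
  set M := maxn Ns Nt.
  have hs' : forall k : int, M%:Z <= `|k| -> s k = 0.
    by move=> k hk; apply: hs; apply: le_trans hk; rewrite lez_nat leq_maxl.
  have ht' : forall k : int, M%:Z <= `|k| -> t k = 0.
    by move=> k hk; apply: ht; apply: le_trans hk; rewrite lez_nat leq_maxr.
  have hst : forall k : int, M%:Z <= `|k| -> (fun k => s k + t k) k = 0.
    by move=> k hk; rewrite /= hs' ?ht' ?addr0.
  rewrite (piB_eq hK1 hK2 hs') (piB_eq hK1 hK2 ht') (piB_eq hK1 hK2 hst) /bsum.
  have E : forall f : nat -> int, \sum_(k < M) iterz phi psi (f k) (sgval (s (f k) + t (f k))) =
     \sum_(k < M) iterz phi psi (f k) (sgval (s (f k))) + \sum_(k < M) iterz phi psi (f k) (sgval (t (f k))).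
    by move=> f; rewrite -big_split; apply: eq_bigr => k _; rewrite sgvalD' (iterzD hK1 hK2).
  by rewrite (E (fun k : nat => k%:Z)) (E (fun k : nat => Negz k)) addrACA.
split.
  move=> g; have [n [hn hg]] := hG g.
  have [F [hFs gF]] := cyclic_fset hn hg.
  have [n0 hn0] := hF F hFs.
  have [s [hsA ->]] := hn0 g gF.
  pose t (k : int) : subg A := if `|k| <= n0%:Z then insubd 0 (s k) else 0.
  have ht : forall k : int, (n0.+1)%:Z <= `|k| -> t k = 0.
    by move=> k hk; rewrite /t ifF //; apply/negbTE; rewrite -ltNge; lia.
  have tE : forall k : int, `|k| <= n0%:Z -> sgval (t k) = s k.
    by move=> k hk; rewrite /t hk val_insubd clE hsA.
  exists t; split; first by exists n0.+1.
  rewrite (piB_eq hK1 hK2 ht) (bil_conv (fun k => iterz phi psi k (s k))) /bsum [X in _ + X = _]big_ord_recr.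
  rewrite ht; last by rewrite /= NegzE; lia.
  rewrite sgval0 (iterz0 hK1 hK2) Monoid.mulm1.
  congr (_ + _); apply: eq_bigr => k _; rewrite tE //.
    have := ltn_ord k; lia.
  have := ltn_ord k; rewrite NegzE /=; lia.
move=> t [N hN].
have hN' : forall k : int, (N.+1)%:Z <= `|k| -> bshift t k = 0.
  by move=> k hk; rewrite /bshift hN //; lia.
rewrite (piB_eq hK1 hK2 hN') (piB_eq hK1 hK2 hN) /bsum /bshift.
set h := fun k : int => iterz phi psi k (sgval (t k)).
have hz : forall k : nat, (N <= k)%N -> h (Negz k) = 0.
  by move=> k hk; rewrite /h hN ?sgval0 ?(iterz0 hK1 hK2) //; rewrite NegzE; lia.
have e1 : forall k : int, iterz phi psi k (sgval (t (k - 1))) = phi (h (k - 1)).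
  by move=> k; rewrite (iterz_pred hK2).
under eq_bigr => k _ do rewrite e1.
under [X in _ + X = _]eq_bigr => k _ do rewrite e1.
rewrite raddfD !raddf_sum.
rewrite [X in X + _ = _]big_ord_recl.
have e2 : \sum_(i < N) phi (h (Negz i)) = \sum_(i < N.+2) phi (h (Negz i)).
  rewrite (sum_stable (f := fun i : nat => phi (h (Negz i))) (N := N) (M := N.+2)) //.
    by move=> k hk; rewrite hz // raddf0.
  by rewrite leqW // leqW.
rewrite e2 [X in _ = _ + X]big_ord_recl.
have E3 : \sum_(i < N) phi (h ((lift ord0 i : nat)%:Z - 1)) = \sum_(i < N) phi (h i).
  apply: eq_bigr => i _; congr (phi (h _)); rewrite lift0; lia.
have E4 : \sum_(i < N.+1) phi (h (Negz i - 1)) = \sum_(i < N.+1) phi (h (Negz (lift ord0 i))).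
  by apply: eq_bigr => i _; congr (phi (h _)); rewrite lift0 !NegzE; lia.
have E5 : ((ord0 : 'I_N.+1) : nat)%:Z - 1 = Negz 0 by [].
rewrite E3 E4 E5.
by rewrite (addrC (phi (h (Negz 0)))) -addrA.
Qed.

Definition dint {S : zmodType} (j : int) (a : S) : int -> S :=
  fun k => if k == j then a else 0.

Lemma eqNegz (m k : nat) : (Negz m == Negz k) = (m == k).
Proof. by apply/eqP/eqP => [[]|->]. Qed.

Lemma bwd_bil (G : zmodType) (phi : {additive G -> G}) (S : finZmodType) :
  bijective phi -> factor_of_bshift phi S -> expansive phi.
Proof.
case=> psi hK1 hK2 [pi [hadd [hsurj hshift]]].
exists psi; split => //; split => //.
have fs_d : forall (j : int) (a : S), fsupp_int (dint j a).
  move=> j a; exists (`|j|%N).+1 => k hk; rewrite /dint; case: eqP => // e.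
  by rewrite e in hk; lia.
have fs0 : fsupp_int (fun _ : int => (0 : S)) by exists 0%N.
have hsub : forall a b : S, pi (dint 0 (a - b)) = pi (dint 0 a) - pi (dint 0 b).
  move=> a b; apply/eqP; rewrite eq_sym subr_eq -hadd //.
  rewrite (_ : (fun k => dint 0 (a - b) k + dint 0 b k) = dint 0 a) //.
  by apply: functional_extensionality => k; rewrite /dint; case: eqP => _; rewrite ?subrK ?addr0.
set A := seq_fset tt [seq pi (dint 0 a) | a <- enum S].
have memA : forall a : S, pi (dint 0 a) \in A.
  by move=> a; rewrite /A seq_fsetE; apply: map_f; rewrite mem_enum.
have hA : finite_subgroup A.
  split.
    have := memA 0; rewrite -(subrr (0 : S)) hsub subrr; done.
  move=> x y; rewrite /A !seq_fsetE => /mapP[a _ ->] /mapP[b _ ->].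
  by rewrite -hsub; apply: map_f; rewrite mem_enum.
have pisucc : forall (j : int) (a : S), pi (dint (j + 1) a) = phi (pi (dint j a)).
  move=> j a; rewrite -hshift //; congr pi.
  by apply: functional_extensionality => k; rewrite /bshift /dint subr_eq.
have pidel : forall (j : int) (a : S), pi (dint j a) = iterz phi psi j (pi (dint 0 a)).
  case=> m a.
    elim: m => // m IH.
    rewrite [in LHS](_ : Posz m.+1 = Posz m + 1); last lia.
    by rewrite pisucc IH.
  elim: m => [|m IH].
    by rewrite -[LHS]hK1 -pisucc.
  rewrite -[LHS]hK1 -pisucc (_ : Negz m.+1 + 1 = Negz m); last by rewrite !NegzE; lia.
  by rewrite IH.
exists A; split => // F hFs.
have key : forall x, exists N, forall n, (N <= n)%N -> in_bil_sum phi psi A n x.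
  move=> x; have [s [[N hN] <-]] := hsurj x.
  exists N => n hn.
  exists (fun k => pi (dint 0 (s k))); split => //.
  have es : s = (fun j => \sum_(i < (n.*2).+1) dint (i%:Z - n%:Z) (s (i%:Z - n%:Z)) j).
    apply: functional_extensionality => j.
    rewrite (bil_conv (fun k => dint k (s k) j)) /dint.
    case: j => m.
      rewrite [X in _ = _ + X]big1 ?addr0; last by [].
      under eq_bigr do rewrite eqz_nat.
      rewrite (delta_sum_nat (fun k : nat => s k)).
      case: ltnP => // hm; rewrite hN //; lia.
    rewrite [X in _ = X + _]big1 ?add0r; last by [].
    under eq_bigr do rewrite eqNegz.
    rewrite (delta_sum_nat (fun k : nat => s (Negz k))).
    case: ltnP => // hm; rewrite hN //; rewrite NegzE; lia.
  rewrite {1}es.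
  have [_ ->] := pi_sum (@fsupp_int_add S) fs0 hadd (n.*2).+1
     (fun i => fs_d (i%:Z - n%:Z) (s (i%:Z - n%:Z))).
  by apply: eq_bigr => k _; apply: pidel.
have [N hN] := unif_bound (enum_fset F) key.
by exists N => x hx; apply: hN.
Qed.

Theorem proposition2p6 (G : zmodType) (hG : torsion G) :
  (forall phi : {additive G -> G},
     pos_expansive phi <->
     exists S : finZmodType, factor_of_ushift phi S) /\
  (forall phi : {additive G -> G}, bijective phi ->
     (expansive phi <->
      exists S : finZmodType, factor_of_bshift phi S)).
Proof.
split => phi.
  by split; [exact: fwd_pos | case=> S; exact: bwd_pos].
move=> hb; split; [exact: fwd_bil | case=> S; exact: (bwd_bil hb)].
Qed.
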